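(* Let $X$ be an SL-space with spatial part $Y$. Then $X$ is an algebraic L-space if and only if $Y$ is a compactly based sober space.
   Context: A Priestley space is a Stone space $X$ with a partial order such that clopen upsets separate points. An L-space is a Priestley space in which the downset of each clopen set is clopen and the closure of each open upset is open. ${\sf ClopUp}(X)$ is the set of clopen upsets. The spatial part of $X$ is $Y=\{y\in X\mid{\downarrow}y\text{ is clopen}\}$, topologized by declaring $V\subseteq Y$ open iff $V=U\cap Y$ for some $U\in{\sf ClopUp}(X)$. $X$ is an SL-space if $Y$ is dense in $X$. A Scott upset is a closed upset $F$ with $\min F\subseteq Y$; ${\sf ClopSUp}(X)$ is the set of clopen Scott upsets; $\mathrm{core}\,U=\bigcup\{V\in{\sf ClopSUp}(X)\mid V\subseteq U\}$. $X$ is an algebraic L-space if $\mathrm{core}\,U$ is dense in $U$ for each $U\in{\sf ClopUp}(X)$. A topological space is compactly based if it has a basis of compact open sets; it is sober if every irreducible closed set is the closure of a unique point. *)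

(* Defs.v *)
From HB Require Import structures.
From mathcomp Require Import all_boot all_order.
From mathcomp Require Import all_classical topology.
Set Implicit Arguments. Unset Strict Implicit. Unset Printing Implicit Defensive.
Local Open Scope classical_set_scope.

Section Ordered.
Variables (X : topologicalType) (le : X -> X -> Prop).

Definition partial_order :=
  [/\ (forall x, le x x),
      (forall x y, le x y -> le y x -> x = y) &
      (forall x y z, le x y -> le y z -> le x z)].

Definition upset (A : set X) := forall x y, A x -> le x y -> A y.
Definition down (A : set X) : set X := [set x | exists2 y, A y & le x y].

Definition stone_space :=
  [/\ compact [set: X], hausdorff_space X & zero_dimensional X].

Definition ClopUp (U : set X) := clopen U /\ upset U.

Definition priestley_space :=
  [/\ stone_space, partial_order &
      forall x y, ~ le x y -> exists U, [/\ ClopUp U, U x & ~ U y]].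

Definition L_space :=
  [/\ priestley_space,
      (forall A, clopen A -> clopen (down A)) &
      (forall U, open U -> upset U -> open (closure U))].

Definition spatial_part : set X := [set y | clopen (down [set y])].

(** Opens of the topology on Y (as subsets of X contained in Y) *)
Definition Y_open (V : set X) :=
  exists2 U, ClopUp U & V = U `&` spatial_part.

Definition SL_space := L_space /\ dense spatial_part.

Definition minimal (F : set X) : set X :=
  [set x | F x /\ forall z, F z -> le z x -> z = x].

Definition scott_upset (F : set X) :=
  [/\ closed F, upset F & minimal F `<=` spatial_part].
Definition ClopSUp (V : set X) :=
  [/\ clopen V, upset V & minimal V `<=` spatial_part].

Definition core (U : set X) : set X :=
  \bigcup_(V in [set V | ClopSUp V /\ V `<=` U]) V.

Definition algebraic_L_space :=
  L_space /\ forall U, ClopUp U -> U `<=` closure (core U).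

End Ordered.

(** Topological notions for a space given by a carrier S : set T and a
    family O of open subsets of S. *)
Section RelTop.
Variables (T : Type) (S : set T) (O : set (set T)).

Definition rclosed (C : set T) := C `<=` S /\ O (S `\` C).

Definition rcompact (K : set T) :=
  K `<=` S /\
  forall (I : Type) (F : I -> set T), (forall i, O (F i)) ->
    K `<=` \bigcup_(i in [set: I]) F i ->
    exists2 D : set I, finite_set D & K `<=` \bigcup_(i in D) F i.

Definition compactly_based :=
  forall V x, O V -> V x -> exists W, [/\ O W, rcompact W, W x & W `<=` V].

Definition rclosure (A : set T) : set T :=
  [set z | S z /\ forall C, rclosed C -> A `<=` C -> C z].

Definition irreducible_closed (C : set T) :=
  [/\ rclosed C, C !=set0 &
      forall C1 C2, rclosed C1 -> rclosed C2 -> C = C1 `|` C2 ->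
        C = C1 \/ C = C2].

Definition sober :=
  forall C, irreducible_closed C ->
    exists y, [/\ S y, C = rclosure [set y] &
                  forall y', S y' -> C = rclosure [set y'] -> y' = y].

End RelTop.

(* Main.v *)
Require Import Defs.
From HB Require Import structures.
From mathcomp Require Import all_boot all_order.
From mathcomp Require Import all_classical topology.
From mathcomp Require Import finmap.
Import Defs.
Local Open Scope classical_set_scope.
Set Implicit Arguments. Unset Strict Implicit.

Definition PT {T : topologicalType} (x0 : T) : Type := T.
HB.instance Definition _ (T : topologicalType) (x0 : T) :=
  Topological.on (PT x0).
HB.instance Definition _ (T : topologicalType) (x0 : T) :=
  isPointed.Build (PT x0) x0.

Lemma cc_fin (X : topologicalType) (K : set X) (I : choiceType) (D : set I)
  (f : I -> set X) : compact K -> (forall i, D i -> open (f i)) ->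
  K `<=` \bigcup_(i in D) f i ->
  exists2 D' : set I, finite_set D' /\ D' `<=` D & K `<=` \bigcup_(i in D') f i.
Proof.
move=> cK of_ KD.
have [[x0 Kx0]|K0] := pselect (K !=set0); last first.
  exists set0; first by split; [exact: finite_set0| by []].
  by move=> x Kx; exfalso; apply: K0; exists x.
have e := @compact_cover (PT x0).
have cK' : compact (K : set (PT x0)) by [].
rewrite e in cK'.
have [D' sD' KD'] := cK' I D f of_ KD.
exists [set` D']; last exact: KD'.
split; first exact: finite_fset.
by move=> i Di; apply/set_mem/sD'.
Qed.

Lemma open_nbhs_of (X : topologicalType) (x : X) (B : set X) :
  nbhs x B -> exists2 B', open B' /\ B' x & B' `<=` B.
Proof. by rewrite nbhsE => -[B' [oB' B'x] B'B]; exists B'. Qed.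

Lemma L1 (X : topologicalType) (Y U : set X) : dense Y -> open U ->
  U `<=` closure (U `&` Y).
Proof.
move=> dY oU x Ux B /open_nbhs_of [B' [oB' B'x] B'B].
have [z [[Uz B'z] Yz]] := dY (U `&` B') (ex_intro _ x (conj Ux B'x)) (openI oU oB').
by exists z; split; [split|apply: B'B].
Qed.

Lemma clsub (X : topologicalType) (A C : set X) : closed C -> A `<=` C ->
  closure A `<=` C.
Proof. by move=> /closure_id cC AC; rewrite cC; apply: closure_subset. Qed.


Definition sepH {X : topologicalType} (le : X -> X -> Prop) :=
  forall x y, ~ le x y -> exists U, [/\ ClopUp le U, U x & ~ U y].

Lemma L3 (X : topologicalType) (le : X -> X -> Prop) : sepH le -> forall m,
  closed (down le [set m]).
Proof.
move=> sep m z clz; apply: contrapT => nd.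
have nzm : ~ le z m by move=> h; apply: nd; exists m.
have [W [[[oW _] upW] Wz nWm]] := sep _ _ nzm.
have [a [[y -> ay] Wa]] := clz W (open_nbhs_nbhs (conj oW Wz)).
by apply: nWm; apply: upW ay.
Qed.

Lemma L2 (X : topologicalType) (le : X -> X -> Prop) (A : set X) y :
  (forall x, le x x) -> upset le A -> spatial_part le y -> closure A y -> A y.
Proof.
move=> rf upA Yy clA; have [[oD _] _] : clopen (down le [set y]) /\ True := conj Yy I; apply: contrapT => nAy.
have [a [Aa [y' -> ay]]] := clA _ (open_nbhs_nbhs (conj oD (ex_intro2 _ _ y erefl (rf y)))).
by apply: nAy; apply: upA ay.
Qed.

Lemma L1' (X : topologicalType) (Y U U' : set X) : dense Y -> open U ->
  closed U' -> U `&` Y `<=` U' -> U `<=` U'.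
Proof.
move=> dY oU cU' sub x Ux; exact: (clsub cU' sub (L1 dY oU Ux)).
Qed.

Lemma downC_up (X : topologicalType) (le : X -> X -> Prop) (A : set X) :
  (forall x y z, le x y -> le y z -> le x z) -> upset le (~` down le A).
Proof.
move=> tr a b nda ab [c Ac bc]; apply: nda; exists c => //; exact: tr ab bc.
Qed.

Lemma rclosure1 (X : topologicalType) (le : X -> X -> Prop) y :
  (forall x, le x x) -> (forall x y z, le x y -> le y z -> le x z) ->
  spatial_part le y ->
  rclosure (spatial_part le) (Y_open le) [set y] =
  [set z | spatial_part le z /\ le z y].
Proof.
move=> rf tr Yy; apply/seteqP; split=> z /=.
  move=> [Yz H]; split => //.
  have : (spatial_part le `&` down le [set y]) z.
    apply: H; last by move=> _ ->; split => //; exists y.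
    split; first by move=> ? [].
    exists (~` down le [set y]).
      split; last exact: downC_up.
      exact: (@clopenC _ _ set0 Yy).
    apply/seteqP; split=> a /=.
    by move=> [Ya nd]; split => // da; apply: nd.
    by move=> [nd Ya]; split => // -[_ /nd].
  by move=> [_ [c cy zc]]; rewrite -cy.
move=> [Yz zy]; split => // C [CY [W [_ upW] eqC]] Cy.
apply: contrapT => nCz.
have : (spatial_part le `\` C) z by split.
rewrite eqC => -[Wz _].
have : (W `&` spatial_part le) y by split => //; apply: upW zy.
by rewrite -eqC => -[_]; apply; apply: Cy.
Qed.


Lemma minbelow (X : topologicalType) (le : X -> X -> Prop) :
  partial_order le -> sepH le -> compact [set: X] ->
  forall F, closed F -> forall x, F x -> exists m, minimal le F m /\ le m x.
Proof.
move=> [rf an tr] sep cX F cF x Fx.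
pose T := {z : X | F z /\ le z x}.
pose R := fun (a b : T) => `[< le (sval b) (sval a) >].
have [||||t Ht] := @Zorn T R.
- by move=> t; apply/asboolP; apply: rf.
- by move=> r s t /asboolP h1 /asboolP h2; apply/asboolP; exact: tr h2 h1.
- move=> [s ps] [t pt] /asboolP /= h1 /asboolP /= h2.
  have e := an _ _ h1 h2; subst; congr exist; exact: Prop_irrelevance.
- move=> A totA; apply: contrapT => H.
  pose Dset := [set z | exists2 s, A s & sval s = z].
  have H' : forall p, F p -> le p x -> exists2 z, Dset z & ~ le p z.
    move=> p Fp px; apply: contrapT => nH; apply: H.
    exists (exist _ p (conj Fp px)) => s As; apply/asboolP; apply: contrapT => nps.
    by apply: nH; exists (sval s) => //; exists s.
  pose K := F `&` down le [set x].
  have cK : compact K.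
    apply: (subclosed_compact _ cX) => //.
    rewrite /K; apply: closedI; [exact: cF|exact: L3 sep x].
  have [D' [fD' D'D] KD'] : exists2 D' : set X, finite_set D' /\ D' `<=` Dset &
      K `<=` \bigcup_(i in D') (fun z => ~` down le [set z]) i.
    apply: (@cc_fin X K X Dset (fun z => ~` down le [set z]) cK).
      by move=> z _; rewrite openC; exact: L3 sep z.
    move=> p [Fp [x' x'x px']]; rewrite x'x in px'.
    have [z Dz npz] := H' p Fp px'; exists z => //.
    by move=> [z' z'z pz']; apply: npz; rewrite -z'z.
  have [S eS] := finite_fsetP.1 fD'.
  have key : forall s : seq X, (forall z, z \in s -> Dset z) ->
      exists b, [/\ F b, le b x, (b = x \/ Dset b) & forall z, z \in s -> le b z].
    elim=> [|a s IH] Hs.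
      by exists x; split => //; left.
    have [sa Asa esa] := Hs a (mem_head _ _).
    have [|b [Fb bx Db hb]] := IH.
      by move=> z zs; apply: Hs; rewrite in_cons zs orbT.
    have [Fa ax] : F a /\ le a x by rewrite -esa; exact: (svalP sa).
    case: Db => [bx'|[sb Asb esb]].
      exists a; split => //; first by right; exists sa.
      move=> z; rewrite in_cons => /orP[/eqP ->|zs]; first exact: rf.
      by apply: tr ax _; rewrite -bx'; apply: hb.
    have [/asboolP h|/asboolP h] := totA sa sb Asa Asb.
      exists b; split => //; first by right; exists sb.
      move=> z; rewrite in_cons => /orP[/eqP ->|zs]; last exact: hb.
      by rewrite -esa -esb.
    exists a; split => //; first by right; exists sa.
    move=> z; rewrite in_cons => /orP[/eqP ->|zs]; first exact: rf.
    by apply: tr (hb z zs); rewrite -esa -esb.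
  have [|b [Fb bx _ hb]] := key S; first by move=> z zS; apply: D'D; rewrite eS.
  have [z D'z nbz] := KD' b (conj Fb (ex_intro2 _ _ x erefl bx)).
  apply: nbz; exists z => //; apply: hb.
  by move: D'z; rewrite eS.
- exists (sval t); split; last exact: (proj2 (svalP t)).
  split; first exact: (proj1 (svalP t)).
  move=> z Fz zt.
  have := Ht (exist _ z (conj Fz (tr _ _ _ zt (proj2 (svalP t))))).
  by move=> /(_ (introT (asboolP _) zt)) <-.
Qed.


Lemma Kcomp (X : topologicalType) (le : X -> X -> Prop) :
  partial_order le -> sepH le -> compact [set: X] ->
  forall U, ClopUp le U -> minimal le U `<=` spatial_part le ->
  rcompact (spatial_part le) (Y_open le) (U `&` spatial_part le).
Proof.
move=> po sep cX U [[oU cU] upU] minY.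
split; first by move=> ? [].
move=> I F OF cov.
have [[i0 _]|nI] := pselect (exists i : I, True); last first.
  exists set0; first exact: finite_set0.
  by move=> y /cov [i _ _]; exfalso; apply: nI; exists i.
have /choice [g Hg] : forall i, exists W, ClopUp le W /\ F i = W `&` spatial_part le.
  by move=> i; have [W cW e] := OF i; exists W.
have UW : U `<=` \bigcup_(i in setT) g i.
  move=> x Ux; have [m [[Um mmin] mx]] := minbelow po sep cX cU Ux.
  have Ym := minY m (conj Um mmin).
  have [i _ Fim] := cov m (conj Um Ym).
  rewrite (proj2 (Hg i)) in Fim; case: Fim => gim _.
  by exists i => //; exact: (proj2 (proj1 (Hg i))) _ _ gim mx.
have cpU : compact U by apply: (subclosed_compact cU cX).
have [D' [fD' D'D] UD'] := @cc_fin X U (set X) (range g) id cpU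
  (fun W => ltac:(by case=> i _ <-; case: (proj1 (Hg i)) => -[])) 
  (fun x Ux => ltac:(by have [i _ gix] := UW x Ux; exists (g i) => //; exists i)).
have /choice [h Hh] : forall W, exists i, D' W -> g i = W.
  move=> W; case: (pselect (D' W)) => [DW|nDW]; last by exists i0.
  by have [i _ gi] := D'D W DW; exists i.
exists (h @` D'); first exact: finite_image.
move=> y [Uy Yy]; have [W D'W Wy] := UD' y Uy.
exists (h W); first by exists W.
by rewrite (proj2 (Hg (h W))) Hh.
Qed.

Lemma Kcomp2 (X : topologicalType) (le : X -> X -> Prop) :
  partial_order le -> sepH le -> dense (spatial_part le) ->
  forall U, ClopUp le U ->
  rcompact (spatial_part le) (Y_open le) (U `&` spatial_part le) ->
  minimal le U `<=` spatial_part le.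
Proof.
move=> [rf an tr] sep dY U [[oU cU] upU] [_ hc] m [Um mmin].
apply: contrapT => nYm.
pose G := fun W : set X => if `[< ClopUp le W /\ ~ W m >] then W else set0.
pose F := fun W => G W `&` spatial_part le.
have OF : forall W, Y_open le (F W).
  move=> W; exists (G W) => //; rewrite /G; case: asboolP => [[]//|_].
  split; first exact: clopen0.
  by move=> ? ? [].
have cov : U `&` spatial_part le `<=` \bigcup_(W in setT) F W.
  move=> y [Uy Yy].
  have nym : ~ le y m by move=> ym; apply: nYm; rewrite -(mmin y Uy ym).
  have [W [cW Wy nWm]] := sep _ _ nym.
  exists W => //; split => //; rewrite /G; case: asboolP => // -[].
  by split.
have [D fD covD] := hc (set X) F OF cov.
have cV : closed (\bigcup_(W in D) G W).
  apply: closed_bigcup fD _ => W _; rewrite /G; case: asboolP => [[[[_ cW] _] _]//|_].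
  exact: closed0.
have := clsub cV (fun y Uy => ltac:(by have [W DW [GW _]] := covD y Uy; exists W)) (L1 dY oU Um).
case=> W _; rewrite /G; case: asboolP => [[_ nWm]|_] //.
Qed.


Lemma ClopUpI (X : topologicalType) (le : X -> X -> Prop) A B :
  ClopUp le A -> ClopUp le B -> ClopUp le (A `&` B).
Proof.
move=> [cA uA] [cB uB]; split; first exact: clopenI.
by move=> a b [Aa Ba] ab; split; [apply: uA ab|apply: uB ab].
Qed.

Lemma ClopUpU (X : topologicalType) (le : X -> X -> Prop) A B :
  ClopUp le A -> ClopUp le B -> ClopUp le (A `|` B).
Proof.
move=> [cA uA] [cB uB]; split; first exact: clopenU.
by move=> a b [Aa|Ba] ab; [left; apply: uA ab|right; apply: uB ab].
Qed.

Lemma soberY (X : topologicalType) (le : X -> X -> Prop) :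
  partial_order le -> sepH le -> compact [set: X] -> dense (spatial_part le) ->
  sober (spatial_part le) (Y_open le).
Proof.
move=> [rf an tr] sep cX dY C [[CY [U [[oU cU] upU] eqC]] [c0 Cc0] prime].
set Ys := spatial_part le in CY eqC Cc0 prime *.
have eC : C = Ys `\` U.
  apply/seteqP; split=> z.
    move=> Cz; split; first exact: CY.
    move=> Uz; have : (U `&` Ys) z by split => //; apply: CY.
    by rewrite -eqC => -[].
  move=> [Yz nUz]; apply: contrapT => nCz.
  have : (Ys `\` C) z by [].
  by rewrite eqC => -[].
have nU0 : ~ U c0 by move: Cc0; rewrite eC => -[].
have primeU : forall W1 W2, ClopUp le W1 -> ClopUp le W2 ->
    W1 `&` W2 `<=` U -> W1 `<=` U \/ W2 `<=` U.
  move=> W1 W2 cW1 cW2 sub.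
  have rcl : forall W, ClopUp le W -> rclosed Ys (Y_open le) (Ys `\` (W `|` U)).
    move=> W cW; split; first by move=> ? [].
    exists (W `|` U); first exact: ClopUpU.
    apply/seteqP; split=> z /=.
      by move=> [Yz H]; split => //; apply: contrapT => nWU; apply: H.
    by move=> [WUz Yz]; split => // -[].
  have eCC : C = (Ys `\` (W1 `|` U)) `|` (Ys `\` (W2 `|` U)).
    rewrite eC; apply/seteqP; split=> z /=.
      move=> [Yz nUz]; apply: contrapT => H.
      have W1z : W1 z.
        apply: contrapT => nW1; apply: H; left; split => // -[]//.
      have W2z : W2 z.
        apply: contrapT => nW2; apply: H; right; split => // -[]//.
      by apply: nUz; apply: sub.
    by move=> [[Yz h]|[Yz h]]; split => // Uz; apply: h; right.
  have tr1 : forall W, ClopUp le W -> C = Ys `\` (W `|` U) -> W `<=` U.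
    move=> W [[oW cW] _] e; apply: (L1' dY oW cU) => z [Wz Yz].
    apply: contrapT => nUz.
    have : C z by rewrite eC.
    by rewrite e => -[_]; apply; left.
  case: (prime _ _ (rcl _ cW1) (rcl _ cW2) eCC) => e.
    by left; apply: tr1 cW1 e.
  by right; apply: tr1 cW2 e.
have [x [nUx maxx]] : exists x, ~ U x /\ forall z, ~ U z -> le z x.
  apply: contrapT => H.
  have H' : forall x, exists W, ~ U x -> [/\ ClopUp le W, ~ W x & ~ W `<=` U].
    move=> x; case: (pselect (U x)) => [Ux|nUx]; first by exists set0.
    have [z [nUz nzx]] : exists z, ~ U z /\ ~ le z x.
      apply: contrapT => nz; apply: H; exists x; split=> // z nUz.
      by apply: contrapT => nzx; apply: nz; exists z.
    have [W [cW Wz nWx]] := sep _ _ nzx.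
    by exists W => _; split => // sub; apply: nUz; apply: sub.
  have /choice [Wf HW] := H'.
  have cK : compact (~` U).
    by apply: (subclosed_compact _ cX) => //; rewrite closedC.
  have [D' [fD' D'D] KD'] : exists2 D' : set X, finite_set D' /\ D' `<=` ~` U &
      ~` U `<=` \bigcup_(i in D') (fun x => ~` Wf x) i.
    apply: (@cc_fin X (~` U) X (~` U) (fun x => ~` Wf x) cK).
      move=> z nUz; rewrite openC; have [[[_ c] _] _ _] := HW z nUz; exact: c.
    move=> z nUz; exists z => //; have [_ h _] := HW z nUz; exact: h.
  have [S eS] := finite_fsetP.1 fD'.
  pose bigI := fun s : seq X => [set p | forall x, x \in s -> Wf x p].
  have key : forall s : seq X, (forall x, x \in s -> ~ U x) ->
      ClopUp le (bigI s) /\ ~ bigI s `<=` U.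
    elim=> [|a s IH] Hs.
      have -> : bigI [::] = setT by apply/seteqP; split.
      split; first by split; [exact: clopenT|by []].
      by move=> sub; apply: nU0; apply: sub.
    have [|cI nI] := IH; first by move=> x xs; apply: Hs; rewrite in_cons xs orbT.
    have [cWa _ nWa] := HW a (Hs a (mem_head _ _)).
    have -> : bigI (a :: s) = Wf a `&` bigI s.
      apply/seteqP; split=> p /=.
        by move=> h; split; [apply: h; exact: mem_head|move=> x xs; apply: h; rewrite in_cons xs orbT].
      by move=> [h1 h2] x; rewrite in_cons => /orP[/eqP ->//|xs]; exact: h2.
    split; first exact: ClopUpI.
    by move=> sub; case: (primeU _ _ cWa cI sub).
  have [|_ nI] := key S; first by move=> x xS; apply: D'D; rewrite eS.
  have [w [Iw nUw]] : exists w, bigI S w /\ ~ U w.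
    by apply: contrapT => h; apply: nI => w Iw; apply: contrapT => nUw; apply: h; exists w.
  have [z D'z nWz] := KD' w nUw.
  by apply: nWz; apply: Iw; move: D'z; rewrite eS.
have edown : down le [set x] = ~` U.
  apply/seteqP; split=> z /=.
    by move=> [y -> zx] Uz; apply: nUx; apply: upU zx.
  by move=> nUz; exists x => //; apply: maxx.
have Yx : Ys x by rewrite /Ys /spatial_part /= edown; exact: (@clopenC _ _ set0 (conj oU cU)).
exists x; split => //.
  rewrite rclosure1 // eC; apply/seteqP; split=> z /=.
    by move=> [Yz nUz]; split => //; apply: maxx.
  by move=> [Yz zx]; split => // Uz; apply: nUx; apply: upU zx.
move=> y' Yy'; rewrite rclosure1 // => e.
have Cx : C x by rewrite eC.
have Cy' : C y' by rewrite e; split => //; exact: rf.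
rewrite e in Cx; case: Cx => _ xy'.
move: Cy'; rewrite eC => -[_ nUy'].
exact: an _ _ (maxx _ nUy') xy'.
Qed.

Unset Implicit Arguments.

Theorem theorem4p11 (X : topologicalType) (le : X -> X -> Prop) :
  SL_space le ->
  (algebraic_L_space le <->
   (compactly_based (spatial_part le) (Y_open le) /\
    sober (spatial_part le) (Y_open le))).
Proof.
move=> [[[[cX hX zX] po sep] Ldown Lcl] dY].
have po' := po; case: po' => rf an tr.
have LS : L_space le by split => //; split => //; split.
split.
- move=> [_ alg]; split; last exact: soberY.
  move=> V x [U cUp ->] [Ux Yx].
  have clx := alg U cUp x Ux.
  have upc : upset le (core le U).
    by move=> a b [V' [[cV upV mV] sV] V'a] ab; exists V' => //; apply: upV ab.
  have [V' [[cV upV mV] sV] V'x] := L2 rf upc Yx clx.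
  exists (V' `&` spatial_part le); split.
  + by exists V'.
  + exact: Kcomp.
  + by split.
  + by move=> z [V'z Yz]; split => //; apply: sV.
- move=> [cb _]; split => //.
  move=> U cUp; case: (cUp) => -[oU cU] upU.
  apply: subset_trans (L1 dY oU) (closure_subset _).
  move=> y [Uy Yy].
  have [W [[U' cU' eW] rcW Wy WU]] := cb (U `&` spatial_part le) y
     (ex_intro2 _ _ U cUp erefl) (conj Uy Yy).
  subst W.
  have minU' := Kcomp2 po sep dY cU' rcW.
  have U'U : U' `<=` U.
    case: (cU') => -[oU' _] _.
    by apply: (L1' dY oU' cU) => z hz; case: (WU z hz).
  case: (cU') => cU'c upU'.
  by exists U'; [split|case: Wy].
Qed.
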